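(* Let $w\in S_\infty$ and $i\ge1$ with $l(ws_i)=l(w)-1$, and let $D\in\mathcal P(w)$. If $\mathrm{mitosis}_i(D)\neq\emptyset$, then either $\mathrm{mitosis}_i(D)\subseteq\mathcal P(ws_i)$ or $\mathrm{mitosis}_i(D)\subseteq\mathcal P(w)$.
   Context: Permutations: $S_\infty=\bigcup_n S_n$ is generated by the simple transpositions $s_a=(a\ a{+}1)$, $a\ge 1$; $l(w)$ is the Coxeter length of $w$. A pipe dream is a finite subset $D\subset\mathbb{Z}_{>0}\times\mathbb{Z}_{>0}$; its elements $(r,c)$ are called crosses (in row $r$, column $c$). The reading word of $D$ is obtained by listing the crosses row by row from top to bottom, within each row from right to left (decreasing $c$), and recording for each cross $(r,c)$ its antidiagonal index $r+c-1$; this gives a word $(a_1,\dots,a_k)$. For $u\in S_\infty$ put $u\star s_a=us_a$ if $l(us_a)=l(u)+1$ and $u\star s_a=u$ otherwise. The Demazure product of $D$ is $\delta(D)=(\cdots((e\star s_{a_1})\star s_{a_2})\cdots)\star s_{a_k}$. For $w\in S_\infty$, $\mathcal P(w)=\{D:\delta(D)=w\}$. Mitosis: for a pipe dream $D$ and row index $i$, let $\mathrm{start}_i(D)=\min\{c\ge 1:(i,c)\notin D\}$ and $\mathcal J_i(D)=\{c<\mathrm{start}_i(D): (i+1,c)\notin D\}$. For $p\in\mathcal J_i(D)$ let $D_p=\big(D\setminus(\{(i,p)\}\cup\{(i,c):c\in\mathcal J_i(D),c<p\})\big)\cup\{(i+1,c):c\in\mathcal J_i(D),c<p\}$ (delete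 $(i,p)$ and move each cross $(i,c)$, $c\in\mathcal J_i(D)$, $c<p$, down to $(i+1,c)$). Then $\mathrm{mitosis}_i(D)=\{D_p:p\in\mathcal J_i(D)\}$ (empty if $\mathcal J_i(D)=\emptyset$). *)

(* Defs.v *)
From mathcomp Require Import all_boot.
Set Implicit Arguments. Unset Strict Implicit. Unset Printing Implicit Defensive.

(* ---------- Elements of S_infinity ----------
   A permutation w of Z_{>0} fixing all but finitely many points is encoded by
   its one-line notation [:: w(1); ...; w(n)] with all trailing fixed points
   removed (so Leibniz equality of encodings = equality of permutations);
   w(k) = k for k > n. *)

Definition is_sinf (w : seq nat) : bool :=
  perm_eq w (iota 1 (size w)) && ((w == [::]) || (last 0 w != size w)).

Definition pv (w : seq nat) (x : nat) : nat :=
  if (0 < x) && (x <= size w) then nth 0 w x.-1 else x.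

Definition sw (a x : nat) : nat :=
  if x == a then a.+1 else if x == a.+1 then a else x.

Fixpoint trimn (n : nat) (s : seq nat) : seq nat :=
  if n is m.+1 then (if nth 0 s m == n then trimn m s else take n s) else [::].
Definition trim (s : seq nat) : seq nat := trimn (size s) s.

Definition rmul (w : seq nat) (a : nat) : seq nat :=
  trim (mkseq (fun k => pv w (sw a k.+1)) (maxn (size w) a.+1)).

(* Coxeter length = number of inversions: pairs of positions i < j with w(i) > w(j) *)
Definition len (w : seq nat) : nat :=
  sumn [seq count (fun i => nth 0 w j < nth 0 w i) (iota 0 j)
       | j <- iota 0 (size w)].

Definition dstar (u : seq nat) (a : nat) : seq nat :=
  if len (rmul u a) == (len u).+1 then rmul u a else u.

(* ---------- Pipe dreams ----------
   A pipe dream is a finite subset of Z_{>0} x Z_{>0}, encoded as a list of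
   crosses (r, c); only membership matters. *)

Definition pipe_dream (D : seq (nat * nat)) : bool :=
  all (fun x => (0 < x.1) && (0 < x.2)) D.

Definition maxrow (D : seq (nat * nat)) : nat := foldr maxn 0 (map fst D).
Definition maxcol (D : seq (nat * nat)) : nat := foldr maxn 0 (map snd D).

Definition reading_word (D : seq (nat * nat)) : seq nat :=
  flatten [seq [seq r + c - 1 | c <- rev (iota 1 (maxcol D)) & (r, c) \in D]
          | r <- iota 1 (maxrow D)].

Definition demazure (D : seq (nat * nat)) : seq nat :=
  foldl dstar [::] (reading_word D).

Definition start (i : nat) (D : seq (nat * nat)) : nat :=
  (find (fun k => (i, k.+1) \notin D) (iota 0 (size D).+1)).+1.

Definition Jset (i : nat) (D : seq (nat * nat)) : seq nat :=
  [seq c <- iota 1 (start i D).-1 | (i.+1, c) \notin D].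

Definition Dp (i : nat) (D : seq (nat * nat)) (p : nat) : seq (nat * nat) :=
  [seq x <- D | (x != (i, p)) &&
                ~~ [&& x.1 == i, x.2 \in Jset i D & x.2 < p]]
  ++ [seq (i.+1, c) | c <- Jset i D & c < p].

Definition mitosis (i : nat) (D : seq (nat * nat)) : seq (seq (nat * nat)) :=
  [seq Dp i D p | p <- Jset i D].

(* Main.v *)
Require Import Defs.
From mathcomp Require Import all_boot zify.
From Stdlib Require Import FunctionalExtensionality.
Set Implicit Arguments. Unset Strict Implicit. Unset Printing Implicit Defensive.

Definition hstep (f : nat -> nat) (a : nat) : nat -> nat :=
  fun x => if f a < f a.+1 then f (sw a x) else f x.
Definition act (f : nat -> nat) (l : seq nat) := foldl hstep f l.
Definition weq (l1 l2 : seq nat) := forall f, act f l1 = act f l2.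

Lemma act_cat f l1 l2 : act f (l1 ++ l2) = act (act f l1) l2.
Proof. exact: foldl_cat. Qed.

Lemma weq_refl l : weq l l. Proof. by []. Qed.
Lemma weq_sym l1 l2 : weq l1 l2 -> weq l2 l1. Proof. by move=> h f. Qed.
Lemma weq_trans l1 l2 l3 : weq l1 l2 -> weq l2 l3 -> weq l1 l3.
Proof. by move=> h1 h2 f; rewrite h1. Qed.
Lemma weq_catl x l1 l2 : weq l1 l2 -> weq (x ++ l1) (x ++ l2).
Proof. by move=> h f; rewrite !act_cat h. Qed.
Lemma weq_catr y l1 l2 : weq l1 l2 -> weq (l1 ++ y) (l2 ++ y).
Proof. by move=> h f; rewrite !act_cat h. Qed.

Lemma swL a : sw a a = a.+1. Proof. by rewrite /sw eqxx. Qed.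
Lemma swR a : sw a a.+1 = a.
Proof. by rewrite /sw eqxx; case: ifP => //; lia. Qed.
Lemma swO a x : x != a -> x != a.+1 -> sw a x = x.
Proof. by rewrite /sw => /negPf -> /negPf ->. Qed.
Lemma swC a x : [\/ x = a /\ sw a x = a.+1, x = a.+1 /\ sw a x = a |
   [/\ x != a, x != a.+1 & sw a x = x]].
Proof.
case: (eqVneq x a) => [->|h1]; first by constructor 1; rewrite swL.
case: (eqVneq x a.+1) => [->|h2]; first by constructor 2; rewrite swR.
by constructor 3; rewrite swO.
Qed.

Lemma comm2 a b : a.+1 < b -> weq [:: a; b] [:: b; a].
Proof.
move=> ab f; rewrite /act /= /hstep; apply: functional_extensionality => x.
have e1 : sw a b = b by rewrite swO //; lia.
have e2 : sw a b.+1 = b.+1 by rewrite swO //; lia.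
have e3 : sw b a = a by rewrite swO //; lia.
have e4 : sw b a.+1 = a.+1 by rewrite swO //; lia.
rewrite e1 e2 e3 e4 !if_same.
case: (f a < f a.+1); case: (f b < f b.+1) => //.
case: (swC a x) => [[-> ->]|[-> ->]|[h3 h4 e5]]; first by rewrite e3 swL e4.
  by rewrite e4 swR e3.
rewrite e5.
by case: (swC b x) => [[-> ->]|[-> ->]|[h5 h6 ->]]; rewrite ?e1 ?e2 ?e5.
Qed.

Lemma braid k : weq [:: k.+1; k; k.+1] [:: k; k.+1; k].
Proof.
move=> f; rewrite /act /= /hstep; apply: functional_extensionality => x.
have r1 : sw k k.+2 = k.+2 by rewrite swO //; lia.
have r2 : sw k.+1 k = k by rewrite swO //; lia.
rewrite !(swL, swR, r1, r2) !if_same.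
have r3 : sw k.+1 k.+2 = k.+1 by rewrite swR.
have [->|[->|[->|[e1 e2]]]] : x = k \/ x = k.+1 \/ x = k.+2 \/
   (sw k x = x /\ sw k.+1 x = x).
  case: (swC k x) => [[-> _]|[-> _]|[h1 h2 e1]]; [by left|by right; left|].
  case: (swC k.+1 x) => [[-> _]|[-> _]|[h3 h4 e2]]; [by right; left|by right; right; left|].
  by right; right; right.
- rewrite !(swL, swR, r1, r2, r3).
  by do ! case: ifP => //=; lia.
- rewrite !(swL, swR, r1, r2, r3).
  by do ! case: ifP => //=; lia.
- rewrite !(swL, swR, r1, r2, r3).
  by do ! case: ifP => //=; lia.
rewrite !(e1, e2).
by do ! case: ifP => //=; lia.
Qed.

Definition far x y := (x.+1 < y) || (y.+1 < x).

Lemma comm2f a b : far a b -> weq [:: a; b] [:: b; a].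
Proof. by case/orP => h; [apply: comm2|apply: weq_sym; apply: comm2]. Qed.

Lemma weq_cons x l1 l2 : weq l1 l2 -> weq (x :: l1) (x :: l2).
Proof. exact: (weq_catl [:: x]). Qed.

Lemma comm1 a Y : (forall y, y \in Y -> far a y) -> weq (a :: Y) (Y ++ [:: a]).
Proof.
elim: Y => [|y Y IH] H //=.
apply: (@weq_trans _ [:: y, a & Y]).
  by apply: (weq_catr Y (comm2f _)); apply: H; rewrite inE eqxx.
apply: weq_cons; apply: IH => z hz; apply: H; by rewrite inE hz orbT.
Qed.

Lemma commL X Y : (forall x y, x \in X -> y \in Y -> far x y) ->
  weq (X ++ Y) (Y ++ X).
Proof.
elim: X => [|x X IH] H /=; first by rewrite cats0.
apply: (@weq_trans _ (x :: (Y ++ X))).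
  apply: weq_cons; apply: IH => a b ha hb; apply: H => //; by rewrite inE ha orbT.
rewrite -cat1s catA -cat_rcons -cats1.
apply: weq_catr; apply: comm1 => y hy; apply: H => //; by rewrite inE eqxx.
Qed.

Definition C a n := rev (iota a n).

Lemma shift1 a n k : a <= k -> k.+2 <= a + n ->
  weq (C a n ++ [:: k.+1]) (k :: C a n).
Proof.
move=> h1 h2; rewrite /C.
have -> : iota a n = iota a (k - a) ++ [:: k; k.+1] ++ iota k.+2 (n - (k - a) - 2).
  have e : n = (k - a) + (n - (k - a) - 2).+2 by lia.
  rewrite {1}e iotaD.
  by have -> : a + (k - a) = k by lia.
rewrite !rev_cat /= !rev_cons /= -!catA /=.
set H := rev (iota k.+2 _); set L := rev (iota a (k - a)).
have fL : forall x, x \in L -> far k.+1 x.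
  move=> x; rewrite mem_rev mem_iota => /andP [_ hx]; rewrite /far; lia.
have fH : forall x, x \in H -> far k x.
  move=> x; rewrite mem_rev mem_iota => /andP [hx _]; rewrite /far; lia.
apply: (@weq_trans _ (H ++ [:: k.+1, k, k.+1 & L])).
  apply: weq_catl; do 2 apply: weq_cons.
  by apply: weq_sym; apply: (comm1 fL).
apply: (@weq_trans _ (H ++ [:: k, k.+1, k & L])).
  by apply: weq_catl; apply: (weq_catr L (braid k)).
have -> : H ++ [:: k, k.+1, k & L] = (H ++ [:: k]) ++ [:: k.+1, k & L] by rewrite -catA.
have -> : k :: H ++ [:: k.+1, k & L] = ([:: k] ++ H) ++ [:: k.+1, k & L] by [].
apply: weq_catr.
by apply: weq_sym; apply: comm1.
Qed.

Lemma weq_mid A B X Y : weq X Y -> weq (A ++ X ++ B) (A ++ Y ++ B).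
Proof. by move=> h; apply: weq_catl; apply: weq_catr. Qed.

Lemma shiftL a n L : (forall x, x \in L -> (a <= x) && (x.+2 <= a + n)) ->
  weq (C a n ++ map succn L) (L ++ C a n).
Proof.
elim: L => [|x L IH] H /=; first by rewrite cats0.
apply: (@weq_trans _ ((C a n ++ [:: x.+1]) ++ map succn L)).
  by rewrite -catA.
apply: (@weq_trans _ ((x :: C a n) ++ map succn L)).
  apply: weq_catr; have /andP [h1 h2] := H x (mem_head _ _); exact: shift1.
apply: weq_cons; apply: IH => y hy; apply: H; by rewrite inE hy orbT.
Qed.

Lemma C_split a m n : C a (m + n) = C (a + m) n ++ C a m.
Proof. by rewrite /C iotaD rev_cat. Qed.

Lemma C_S a m : C a m.+1 = C a.+1 m ++ [:: a].
Proof. by rewrite /C /= rev_cons cats1. Qed.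

Lemma C_top a m : C a m.+1 = (a + m) :: C a m.
Proof. by rewrite -addn1 C_split /C /=; rewrite -?addn1. Qed.

Lemma map_add_iota (g : nat -> nat) t a n : (forall c, g c = t + c) ->
  map g (iota a n) = iota (t + a) n.
Proof.
move=> hg; elim: n a => [|n IH] a //=; by rewrite IH hg addnS.
Qed.

Lemma map_succ_C a n : map succn (C a n) = C a.+1 n.
Proof. by rewrite /C map_rev (@map_add_iota _ 1) // => c; rewrite add1n. Qed.

Lemma map_add_C t a n : map (fun c => t + c) (C a n) = C (t + a) n.
Proof. by rewrite /C map_rev (@map_add_iota _ t). Qed.

Lemma map_addS_C t a n : map (fun c => (t + c).+1) (C a n) = C (t + a).+1 n.
Proof. by rewrite /C map_rev (@map_add_iota _ t.+1) // => c; rewrite addSn. Qed.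

Lemma memC x a n : x \in C a n = (a <= x < a + n).
Proof. by rewrite /C mem_rev mem_iota. Qed.

Definition cols n := C 1 n.

Definition WD t n (K : pred nat) :=
  map (fun c => t + c) (cols n) ++ map (fun c => (t + c).+1) (filter K (cols n)).
Definition WE t n (K : pred nat) p :=
  map (fun c => t + c) (filter (fun c => (p < c) || (c < p) && K c) (cols n)) ++
  map (fun c => (t + c).+1) (filter (fun c => (c < p) || K c) (cols n)).

Lemma cols_split p n : 0 < p <= n ->
  cols n = C p.+1 (n - p) ++ p :: cols p.-1.
Proof.
move=> /andP [h1 h2]; rewrite /cols.
rewrite {1}(_ : n = p.-1 + (1 + (n - p))); last by lia.
rewrite !C_split C_S /= -catA /=.
have -> : 1 + p.-1 = p by lia.
by rewrite addn1.
Qed.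

Lemma mem_mapF (f : nat -> nat) (P : pred nat) l x :
  x \in map f (filter P l) -> exists2 c, c \in l & x = f c.
Proof. by case/mapP => c; rewrite mem_filter => /andP [_ hc] ->; exists c. Qed.

Lemma filter_all (P : pred nat) l : (forall x, x \in l -> P x) -> filter P l = l.
Proof. by move=> h; rewrite -[RHS]filter_predT; apply: eq_in_filter => x /h ->. Qed.

Lemma filter_none (P : pred nat) l : (forall x, x \in l -> ~~ P x) -> filter P l = [::].
Proof. by move=> h; rewrite -(filter_pred0 l); apply: eq_in_filter => x /h /negPf ->. Qed.

Lemma blockD t n K p : 0 < p <= n -> ~~ K p ->
  weq (WD t n K) (WE t n K p ++ [:: (t.+1)]).
Proof.
move=> hp nKp; rewrite /WD /WE (cols_split hp) !filter_cat /= (negPf nKp).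
have lt0 : (p < p) = false by rewrite ltnn.
rewrite lt0 /=.
set Hi := C p.+1 (n - p); set Lo := cols p.-1.
rewrite (@filter_all (fun c => (p < c) || (c < p) && K c) Hi); last by move=> x; rewrite memC /= => /andP [h _]; apply/orP; left.
rewrite (@eq_in_filter _ (fun c => (c < p) || K c) K Hi); last first.
  by move=> x; rewrite memC /= => /andP [h _]; have -> : (x < p) = false by lia.
rewrite (@eq_in_filter _ (fun c => (p < c) || (c < p) && K c) K Lo); last first.
  move=> x; rewrite memC /= => /andP [_ h]; have h1 : (p < x) = false by lia. have h2 : (x < p) = true by lia. by rewrite h1 h2.
rewrite (@filter_all (fun c => (c < p) || K c) Lo); last by move=> x; rewrite memC /= => /andP [_ h]; apply/orP; left; lia.
rewrite !map_cat /= -!catA.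
set HH := map _ Hi; set FK := map (fun c => t + c) (filter K Lo).
set GH := map (fun c => (t + c).+1) (filter K Hi).
set SK := map (fun c => (t + c).+1) (filter K Lo).
have eSK : SK = map succn FK by rewrite /SK /FK -map_comp.
have eC : t + p :: map (fun c => t + c) Lo = C t.+1 p.
  have p0 : 0 < p by case/andP: hp.
  rewrite /Lo /cols map_add_C -{3}(prednK p0) C_top addn1; congr (_ :: _); lia.
have eL : map (fun c => (t + c).+1) Lo = C t.+2 p.-1.
  by rewrite /Lo /cols map_addS_C addn1.
have eC2 : C t.+1 p = C t.+2 p.-1 ++ [:: t.+1].
  by rewrite -{1}(prednK (proj1 (andP hp))) C_S.
rewrite eC eL.
have fGS : forall x y, x \in GH -> y \in SK -> far x y.
  move=> x y /mem_mapF [c hc ->] /mem_mapF [d hd ->]; move: hc hd; rewrite /Lo /cols !memC /far; lia.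
have fCG : forall x y, x \in C t.+1 p -> y \in GH -> far x y.
  move=> x y hx /mem_mapF [d hd ->]; move: hx hd; rewrite /Lo /cols !memC /far; lia.
apply: (@weq_trans _ (HH ++ C t.+1 p ++ SK ++ GH)).
  by apply: weq_catl; apply: weq_catl; apply: commL.
apply: (@weq_trans _ (HH ++ FK ++ C t.+1 p ++ GH)).
  apply: weq_catl; rewrite !catA; apply: weq_catr; rewrite eSK; apply: shiftL.
  move=> x /mem_mapF [c hc ->]; move: hc; rewrite /Lo /cols !memC; lia.
apply: weq_catl; apply: weq_catl.
rewrite -eC2; exact: commL.
Qed.


Lemma cols_split2 p q n : 0 < p -> p < q -> q <= n ->
  cols n = C q.+1 (n - q) ++ q :: C p.+1 (q - p - 1) ++ p :: cols p.-1.
Proof.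
move=> h1 h2 h3.
rewrite (@cols_split q n); last by apply/andP; split => //; lia.
rewrite (@cols_split p q.-1); last by apply/andP; split => //; lia.
by have -> : q.-1 - p = q - p - 1 by lia.
Qed.

Ltac farl := repeat match goal with
  | h : _ \in map _ (filter _ _) |- _ => case/mem_mapF: h => ? ? ->
  | h : _ \in map _ _ |- _ => case/mapP: h => ? ? ->
  end.

Lemma blockE1 t n K p q : 0 < p -> p < q -> q <= n -> ~~ K p -> ~~ K q ->
  (forall c, p < c < q -> K c) -> weq (WE t n K p) (WE t n K q).
Proof.
move=> h1 h2 h3 nKp nKq hK.
rewrite /WE (cols_split2 h1 h2 h3) !filter_cat /=.
set Hi := C q.+1 (n - q); set Mid := C p.+1 (q - p - 1); set Lo := cols p.-1.
rewrite ?filter_cat /= ?filter_cat /=.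
have qp : (q < p) = false by lia.
rewrite ?(negPf nKp) ?(negPf nKq) ltnn h2 qp /=.
rewrite (@filter_all (fun c => (p < c) || (c < p) && K c) Hi); last first.
  by move=> x; rewrite memC /= => /andP [h _]; apply/orP; left; lia.
rewrite (@filter_all (fun c => (q < c) || (c < q) && K c) Hi); last first.
  by move=> x; rewrite memC /= => /andP [h _]; apply/orP; left; lia.
rewrite (@filter_all (fun c => (p < c) || (c < p) && K c) Mid); last first.
  by move=> x; rewrite memC /= => /andP [h _]; apply/orP; left; lia.
rewrite (@filter_all (fun c => (q < c) || (c < q) && K c) Mid); last first.
  move=> x; rewrite memC /= => /andP [h h']; apply/orP; right.
  by apply/andP; split; [lia|apply: hK; lia].
rewrite (@filter_all (fun c => (c < p) || K c) Mid); last first.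
  by move=> x; rewrite memC /= => /andP [h h']; apply/orP; right; apply: hK; lia.
rewrite (@filter_all (fun c => (c < q) || K c) Mid); last first.
  by move=> x; rewrite memC /= => /andP [h h']; apply/orP; left; lia.
rewrite (@eq_in_filter _ (fun c => (c < p) || K c) K Hi); last first.
  by move=> x; rewrite memC /= => /andP [h _]; have -> : (x < p) = false by lia.
rewrite (@eq_in_filter _ (fun c => (c < q) || K c) K Hi); last first.
  by move=> x; rewrite memC /= => /andP [h _]; have -> : (x < q) = false by lia.
rewrite (@eq_in_filter _ (fun c => (p < c) || (c < p) && K c) K Lo); last first.
  move=> x; rewrite memC /= => /andP [_ h]; have e1 : (p < x) = false by lia.
  have e2 : (x < p) = true by lia.
  by rewrite e1 e2.
rewrite (@eq_in_filter _ (fun c => (q < c) || (c < q) && K c) K Lo); last first.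
  move=> x; rewrite memC /= => /andP [_ h]; have e1 : (q < x) = false by lia.
  have e2 : (x < q) = true by lia.
  by rewrite e1 e2.
rewrite (@filter_all (fun c => (c < p) || K c) Lo); last first.
  by move=> x; rewrite memC /= => /andP [_ h]; apply/orP; left; lia.
rewrite (@filter_all (fun c => (c < q) || K c) Lo); last first.
  by move=> x; rewrite memC /= => /andP [_ h]; apply/orP; left; lia.
rewrite !map_cat /= -!catA ltnn /= !map_cat /= -!catA.
set B := t + p.+1.
have eMid : map (fun c => t + c) Mid = C B (q - p - 1) by rewrite map_add_C.
have eMidS : map (fun c => (t + c).+1) Mid = C B.+1 (q - p - 1) by rewrite map_addS_C.
have eTop : t + q :: C B (q - p - 1) = C B (q - p - 1).+1.
  by rewrite C_top; congr (_ :: _); rewrite /B; lia.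
have eBot : C B.+1 (q - p - 1) ++ (t + p).+1 :: [seq (t + c).+1 | c <- Lo] =
   C B (q - p - 1).+1 ++ [seq (t + c).+1 | c <- Lo].
  by rewrite C_S -catA /B addnS.
rewrite eMid eMidS eBot -[t + q :: _ ++ _]cat_cons eTop.
set HH := map (fun c => t + c) Hi.
set FK := map (fun c => t + c) (filter K Lo).
set GH := map (fun c => (t + c).+1) (filter K Hi).
set Lo' := map (fun c => (t + c).+1) Lo.
set CB := C B (q - p - 1).+1; set CB' := C B (q - p - 1); set CS := C B.+1 (q - p - 1).
have fS : forall x y, x \in FK ++ GH -> y \in CS -> far x y.
  move=> x y; rewrite mem_cat => /orP [] /mem_mapF [c hc ->] hy; move: hc hy;
  rewrite /Lo /Hi /cols /CS /B !memC /far; lia.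
have fB : forall x y, x \in FK ++ GH -> y \in CB -> far x y.
  move=> x y; rewrite mem_cat => /orP [] /mem_mapF [c hc ->] hy; move: hc hy;
  rewrite /Lo /Hi /cols /CB /B !memC /far; lia.
apply: (@weq_trans _ (HH ++ CB ++ CS ++ FK ++ GH ++ Lo')).
  apply: weq_catl; apply: weq_catl; rewrite !catA; apply: weq_catr; rewrite -!catA.
  have := commL fS; rewrite -catA; exact.
apply: (@weq_trans _ (HH ++ CB' ++ CB ++ FK ++ GH ++ Lo')); last first.
  apply: weq_catl; apply: weq_catl; rewrite !catA; apply: weq_catr; rewrite -!catA.
  have := commL fB; rewrite -catA => h; apply: weq_sym; exact: h.
apply: weq_catl; rewrite !catA; do 3 apply: weq_catr.
rewrite /CS -map_succ_C; apply: shiftL => x; rewrite /CB' memC; lia.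
Qed.



Lemma blockE t n K p q : 0 < p -> p < q -> q <= n -> ~~ K p -> ~~ K q ->
  weq (WE t n K p) (WE t n K q).
Proof.
move=> h0; have [d] := ubnP (q - p); elim: d p q h0 => [|d IH] p q h0 hd h1 h2 nKp nKq.
  by lia.
case: (boolP (has (fun c => ~~ K c) (iota p.+1 (q - p - 1)))).
  case/hasP => r; rewrite mem_iota => hr nKr.
  apply: (@weq_trans _ (WE t n K r)).
    apply: IH => //; lia.
  apply: IH => //; lia.
rewrite -all_predC => /allP hK.
apply: blockE1 => // c hc; have := hK c; rewrite mem_iota /= negbK; apply; lia.
Qed.

Lemma count_sumE (T : Type) (P : pred T) (l : seq T) : count P l = \sum_(x <- l) P x.
Proof. by elim: l => [|x l IH]; rewrite ?big_nil ?big_cons //= IH. Qed.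





Lemma swK a x : sw a (sw a x) = x.
Proof. by case: (swC a x) => [[-> ->]|[-> ->]|[_ _ e]]; rewrite ?swL ?swR ?e ?e. Qed.
Lemma swB a x N : x < N.+1 -> a.+1 <= N -> sw a x < N.+1.
Proof. by case: (swC a x) => [[-> ->]|[-> ->]|[_ _ ->]]; lia. Qed.

Definition inv (f : nat -> nat) N :=
  \sum_(0 <= x < N.+1) \sum_(0 <= y < N.+1) ((0 < x) && (x < y) && (f y < f x)).

Lemma sum_ind_eq b a N : a < N ->
  \sum_(0 <= y < N) (b && (y == a)) = b.
Proof.
move=> h; case: b => /=; last by rewrite big1.
by rewrite -count_sumE count_uniq_mem ?iota_uniq // mem_iota subn0 add0n h leq0n.
Qed.

Lemma invE f N : inv f N =
  \sum_(x < N.+1) \sum_(y < N.+1) ((0 < x) && (x < y) && (f y < f x)).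
Proof.
rewrite /inv big_mkord; apply: eq_bigr => x _; by rewrite big_mkord.
Qed.

Lemma inv_swap f N a : 0 < a -> a.+1 <= N -> f a < f a.+1 ->
  inv (fun x => f (sw a x)) N = (inv f N).+1.
Proof.
move=> a0 aN fa.
have swN : forall x : 'I_N.+1, sw a x < N.+1 by move=> x; apply: swB.
pose h (x : 'I_N.+1) : 'I_N.+1 := Ordinal (swN x).
have hinv : forall x, h (h x) = x.
  by move=> x; apply: val_inj => /=; rewrite swK.
have hinj : injective h by move=> x y e; rewrite -(hinv x) -(hinv y) e.
rewrite !invE (reindex_inj hinj).
under eq_bigr => x _ do rewrite (reindex_inj hinj).
rewrite /h /=.
have pt : forall x y : 'I_N.+1,
  ((0 < sw a x) && (sw a x < sw a y) && (f (sw a (sw a y)) < f (sw a (sw a x))) : nat) =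
  ((0 < x) && (x < y) && (f y < f x)) + ((x == a.+1 :> nat) && (y == a :> nat)).
  move=> x y; rewrite !swK.
  case: (swC a x) => [[-> ->]|[-> ->]|[h1 h2 ->]];
  case: (swC a y) => [[-> ->]|[-> ->]|[h3 h4 ->]]; rewrite ?eqxx /=;
  do ? case: ifP => //=; try lia.
under eq_bigr => x _ do under eq_bigr => y _ do rewrite pt.
under eq_bigr => x _ do rewrite big_split /=.
rewrite big_split /=; rewrite -[in RHS]addn1; congr (_ + _).
have e1 : forall x : 'I_N.+1,
  \sum_(y < N.+1) ((x == a.+1 :> nat) && (y == a :> nat)) = (x == a.+1 :> nat).
  move=> x; have aN1 : a < N.+1 by lia.
  by rewrite -[RHS](sum_ind_eq (x == a.+1 :> nat) aN1) big_mkord.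
under eq_bigr => x _ do rewrite e1.
have aN2 : a.+1 < N.+1 by lia.
by have := sum_ind_eq true aN2; rewrite big_mkord.
Qed.



Lemma sum0 m n (F : nat -> nat) : (forall i, m <= i < n -> F i = 0) ->
  \sum_(m <= i < n) F i = 0.
Proof. by move=> H; rewrite big_nat_cond big1 // => i /andP [h _]; exact: H. Qed.

Lemma pv_in s x : 0 < x <= size s -> pv s x = nth 0 s x.-1.
Proof. by rewrite /pv => ->. Qed.
Lemma pv_out s x : size s < x -> pv s x = x.
Proof. by rewrite /pv; case: ifP => //; lia. Qed.
Lemma pv0 s : pv s 0 = 0.
Proof. by []. Qed.

Lemma len_inv s N : size s <= N ->
  (forall x, 0 < x <= size s -> pv s x <= size s) ->
  len s = inv (pv s) N.
Proof.
move=> hN hb; set n := size s.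
have hnN : n <= N := hN.
have eL : len s = \sum_(0 <= j < n) \sum_(0 <= i < j) (nth 0 s j < nth 0 s i).
  rewrite /len sumnE big_map /index_iota subn0; apply: eq_bigr => j _.
  by rewrite count_sumE subn0.
rewrite eL /inv exchange_big_nat; symmetry.
rewrite big_ltn //= [X in X + _]sum0; last by move=> x _; rewrite andbF.
rewrite add0n (@big_cat_nat _ _ _ n.+1) //=.
rewrite [X in _ + X]sum0 ?addn0; last first.
  move=> y hy; apply: sum0 => x hx.
  rewrite (pv_out (_ : n < y)); last by lia.
  case: (leqP x n) => hx2.
    case: (posnP x) => [->|x0] //=.
    have := hb x; rewrite x0 hx2 => /(_ isT) h.
    by apply/eqP; rewrite eqb0; apply/negP; lia.
  by rewrite (pv_out hx2); apply/eqP; rewrite eqb0; apply/negP; lia.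
rewrite big_add1 /=; apply: eq_big_nat => j hj.
rewrite big_ltn //= add0n (@big_cat_nat _ _ _ j.+1) //=; last by lia.
rewrite [X in _ + X]sum0 ?addn0; last by move=> x hx; apply/eqP; rewrite eqb0; apply/negP; lia.
rewrite big_add1 /=; apply: eq_big_nat => i hi.
rewrite !pv_in /=; last by lia. 2: by lia.
by congr nat_of_bool; apply/idP/idP; [case/andP|move=> ->; rewrite andbT; lia].
Qed.


Lemma trimn_spec n s : n <= size s -> exists k, [/\ k <= n, trimn n s = take k s,
  (k == 0) || (nth 0 s k.-1 != k) & forall j, k <= j < n -> nth 0 s j = j.+1].
Proof.
elim: n => [|m IH] hm /=.
  exists 0; split => //; try (by rewrite take0); move=> j; lia.
case: ifP => [/eqP e|/negbT e].
  have [k [h1 h2 h3 h4]] := IH (ltnW hm).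
  exists k; split => //; first lia.
  move=> j hj; case: (ltnP j m) => hjm; first by apply: h4; lia.
  by have -> : j = m by lia.
exists m.+1; split => //=.
move=> j; lia.
Qed.

Definition trimmed (s : seq nat) := (s == [::]) || (last 0 s != size s).

Lemma trim_spec s : [/\ trimmed (trim s), size (trim s) <= size s &
   forall x, pv (trim s) x = pv s x].
Proof.
have [k [h1 h2 h3 h4]] := trimn_spec (leqnn (size s)).
rewrite /trim h2.
have sk : size (take k s) = k by rewrite size_take; case: ltnP => //; lia.
split.
- rewrite /trimmed sk; case: (posnP k) => [k0|k0].
    by rewrite k0 take0.
  apply/orP; right; rewrite -nth_last sk nth_take; last by lia.
  by move: h3; rewrite (_ : (k == 0) = false) //=; lia.
- by rewrite sk.
move=> x; rewrite /pv sk.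
case: (posnP x) => [->|x0] //=.
case: (leqP x k) => hxk /=.
  rewrite nth_take; last by lia.
  by have -> : x <= size s by lia.
case: (leqP x (size s)) => hxs //=.
by rewrite h4 //; lia.
Qed.

Lemma trimmed_inj s1 s2 : trimmed s1 -> trimmed s2 ->
  (forall x, pv s1 x = pv s2 x) -> s1 = s2.
Proof.
have key : forall s t, trimmed t -> (forall x, pv s x = pv t x) -> size t <= size s.
  move=> s t; rewrite /trimmed => ht hst; case: (leqP (size t) (size s)) => // hlt.
  move: ht; case: t hst hlt => [|y t] //= hst hlt.
  have := hst (size t).+1; rewrite pv_out //= pv_in /=; last by lia.
  move=> e; have : last 0 (y :: t) = nth 0 (y :: t) (size t) by rewrite -nth_last.
  by move=> /= ->; rewrite -e eqxx.
move=> h1 h2 h; have e : size s1 = size s2.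
  by apply/eqP; rewrite eqn_leq (key _ _ h1) ?(key _ _ h2) //.
apply: (@eq_from_nth _ 0) => // j hj.
have := h j.+1; rewrite !pv_in //=; lia.
Qed.

Lemma pv_mkseq g N x : 0 < x <= N -> pv (mkseq g N) x = g x.-1.
Proof. by move=> h; rewrite pv_in ?size_mkseq // nth_mkseq //; lia. Qed.

Lemma pv_rmul u a x : 0 < a -> pv (rmul u a) x = pv u (sw a x).
Proof.
move=> a0; rewrite /rmul; case: (trim_spec (mkseq (fun k => pv u (sw a k.+1)) (maxn (size u) a.+1))) => _ _ ->.
set N := maxn (size u) a.+1.
case: (posnP x) => [->|x0].
  by rewrite pv0 swO ?pv0 //; lia.
case: (leqP x N) => hx.
  by rewrite pv_mkseq ?x0 //= prednK.
rewrite pv_out ?size_mkseq // swO; try lia.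
by rewrite pv_out //; lia.
Qed.

Definition valid (s : seq nat) := [/\ trimmed s,
  (forall x y, 0 < x -> 0 < y -> pv s x = pv s y -> x = y) &
  (forall x, 0 < x -> 0 < pv s x)].

Lemma valid_nil : valid [::].
Proof.
split => //.
  by move=> x y x0 y0; rewrite (@pv_out [::] x) // (@pv_out [::] y).
by move=> x x0; rewrite (@pv_out [::] x).
Qed.

Lemma valid_bound s x : valid s -> 0 < x <= size s -> pv s x <= size s.
Proof.
case=> _ hi hp /andP [x0 xs]; case: (leqP (pv s x) (size s)) => // h.
have := hi x (pv s x) x0 (hp x x0); rewrite (pv_out h) => /(_ erefl) e; lia.
Qed.

Lemma valid_rmul u a : valid u -> 0 < a -> valid (rmul u a).
Proof.
case=> h1 h2 h3 a0; split.
- by rewrite /rmul; case: (trim_spec (mkseq (fun k => pv u (sw a k.+1)) (maxn (size u) a.+1))).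
- have sp : forall x, 0 < x -> 0 < sw a x.
    by move=> x x0; case: (swC a x) => [[_ ->]|[_ ->]|[_ _ ->]].
  move=> x y x0 y0; rewrite !pv_rmul // => e.
  have := h2 _ _ (sp x x0) (sp y y0) e => e2.
  by rewrite -(swK a x) -(swK a y) e2.
move=> x x0; rewrite pv_rmul //; apply: h3.
by case: (swC a x) => [[_ ->]|[_ ->]|[_ _ ->]].
Qed.

Lemma pv_rmulF u a : 0 < a -> pv (rmul u a) = (fun x => pv u (sw a x)).
Proof. by move=> a0; apply: functional_extensionality => x; rewrite pv_rmul. Qed.

Lemma size_rmul u a : size (rmul u a) <= maxn (size u) a.+1.
Proof.
rewrite /rmul; case: (trim_spec (mkseq (fun k => pv u (sw a k.+1)) (maxn (size u) a.+1))).
by rewrite size_mkseq.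
Qed.

Lemma len_rmul u a : valid u -> 0 < a -> pv u a < pv u a.+1 ->
  len (rmul u a) = (len u).+1.
Proof.
move=> vu a0 lt; set N := maxn (size u) a.+1.
have vr := valid_rmul vu a0.
rewrite (@len_inv u N); last 2 first.
- by rewrite /N leq_maxl.
- by move=> x hx; apply: valid_bound.
rewrite (@len_inv _ N); last 2 first.
- exact: size_rmul.
- by move=> x hx; apply: valid_bound.
rewrite pv_rmulF //; apply: inv_swap => //.
by rewrite /N leq_maxr.
Qed.

Lemma rmulK u a : valid u -> 0 < a -> rmul (rmul u a) a = u.
Proof.
move=> vu a0; have vr := valid_rmul vu a0; have vrr := valid_rmul vr a0.
apply: trimmed_inj; [by case: vrr|by case: vu|] => x.
by rewrite !pv_rmul // swK.
Qed.

Lemma dstar_sem u a : valid u -> 0 < a ->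
  valid (dstar u a) /\ pv (dstar u a) = hstep (pv u) a.
Proof.
move=> vu a0; rewrite /dstar /hstep.
case: (ltnP (pv u a) (pv u a.+1)) => h.
  rewrite len_rmul // eqxx; split; first exact: valid_rmul.
  by rewrite pv_rmulF.
have h' : pv u a.+1 < pv u a.
  rewrite ltn_neqAle h andbT; apply/negP => /eqP e.
  case: vu => _ hi _; have := hi _ _ a0 (ltn0Sn a) (esym e); lia.
have vr := valid_rmul vu a0.
have : pv (rmul u a) a < pv (rmul u a) a.+1 by rewrite !pv_rmul // swL swR.
move=> /(len_rmul vr a0); rewrite rmulK // => e.
rewrite (_ : (len (rmul u a) == (len u).+1) = false); last by rewrite e; lia.
split => //.
Qed.

Lemma fold_sem l u : valid u -> all (fun a => 0 < a) l ->
  valid (foldl dstar u l) /\ pv (foldl dstar u l) = act (pv u) l.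
Proof.
elim: l u => [|a l IH] u vu //= /andP [a0 hl].
have [v1 e1] := dstar_sem vu a0.
by have [v2 e2] := IH _ v1 hl; rewrite /act /= -e1.
Qed.

Definition rw (X : seq (nat * nat)) r M := [seq r + c - 1 | c <- C 1 M & (r, c) \in X].

Lemma maxrow_ge X x : x \in X -> x.1 <= maxrow X.
Proof.
elim: X => [|y X IH] //=; rewrite inE => /orP [/eqP ->|/IH h]; rewrite /maxrow /= -/(maxrow X);
  [exact: leq_maxl | exact: leq_trans h (leq_maxr _ _)].
Qed.

Lemma maxcol_ge X x : x \in X -> x.2 <= maxcol X.
Proof.
elim: X => [|y X IH] //=; rewrite inE => /orP [/eqP ->|/IH h]; rewrite /maxcol /= -/(maxcol X);
  [exact: leq_maxl | exact: leq_trans h (leq_maxr _ _)].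
Qed.

Lemma rw_ext X r M : maxcol X <= M -> rw X r M = rw X r (maxcol X).
Proof.
move=> h; rewrite /rw (_ : M = maxcol X + (M - maxcol X)); last by lia.
rewrite C_split filter_cat filter_none ?cat0s // => c; rewrite memC.
by apply: contraTN => /maxcol_ge /=; lia.
Qed.

Lemma rw_out X r M : maxrow X < r -> rw X r M = [::].
Proof.
move=> h; rewrite /rw filter_none // => c _; apply: contraTN h => /maxrow_ge /=; lia.
Qed.

Lemma rword X R M : maxrow X <= R -> maxcol X <= M ->
  reading_word X = flatten [seq rw X r M | r <- iota 1 R].
Proof.
move=> hR hM; rewrite /reading_word (_ : R = maxrow X + (R - maxrow X)); last by lia.
rewrite iotaD map_cat flatten_cat.
rewrite (_ : flatten [seq rw X r M | r <- iota (1 + maxrow X) (R - maxrow X)] = [::]).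
  rewrite cats0; congr flatten; apply: eq_map => r; rewrite rw_ext //.
have : maxrow X < 1 + maxrow X by lia.
elim: (R - maxrow X) (1 + maxrow X) => [|k IH] s hs //=.
by rewrite rw_out ?IH //; lia.
Qed.

Lemma rword_pos X : all (fun a => 0 < a) (reading_word X).
Proof.
rewrite /reading_word; apply/allP => a /flattenP [l /mapP [r hr ->]] /mapP [c hc ->].
move: hr hc; rewrite mem_iota mem_filter mem_rev mem_iota; lia.
Qed.

Lemma start_in i D c : 0 < c < start i D -> (i, c) \in D.
Proof.
move=> /andP [c0 hc]; rewrite /start in hc.
set s := iota 0 (size D).+1 in hc.
have hk : c.-1 < find (fun k => (i, k.+1) \notin D) s by lia.
have := before_find 0 hk; rewrite nth_iota; last first.
  have := find_size (fun k => (i, k.+1) \notin D) s; rewrite size_iota; lia.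
by rewrite add0n prednK // => /negbFE.
Qed.

Lemma mem_J i D c : (c \in Jset i D) = (0 < c <= (start i D).-1) && ((i.+1, c) \notin D).
Proof.
rewrite /Jset mem_filter mem_iota andbC; congr andb.
Qed.

Lemma mem_Dp i D p x : (x \in Dp i D p) =
  ((x \in D) && (x != (i, p)) && ~~ [&& x.1 == i, x.2 \in Jset i D & x.2 < p]) ||
  ((x.1 == i.+1) && (x.2 \in Jset i D) && (x.2 < p)).
Proof.
rewrite /Dp mem_cat mem_filter andbA; congr orb.
  by rewrite andbC andbA.
case: x => a b /=; apply/mapP/idP.
  by case=> c; rewrite mem_filter => /andP [h1 h2] [-> ->]; rewrite eqxx h2 h1.
case/andP => /andP [/eqP -> h1] h2; exists b => //; by rewrite mem_filter h1 h2.
Qed.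

Lemma startE i D : start i D = (start i D).-1.+1.
Proof. by []. Qed.

Lemma rowEi i D p c : p \in Jset i D -> 0 < c ->
  ((i, c) \in Dp i D p) =
  if c <= (start i D).-1 then (p < c) || (c < p) && ((i.+1, c) \in D) else (i, c) \in D.
Proof.
rewrite mem_J => /andP [hp nKp] c0; rewrite mem_Dp mem_J.
have hst := @start_in i D; have st1 : 0 < start i D by [].
move: hp hst st1; set st := start i D; clearbody st => hp hst st1.
rewrite /= eqxx /=.
have -> : (i == i.+1) = false by lia.
rewrite andFb andFb orbF xpair_eqE eqxx /=.
case: ifP => hc.
  rewrite hst ?c0 //=; last by lia.
  move: nKp; case: ((i.+1, c) \in D) => /=; case: ((i.+1, p) \in D) => //= _; lia.
have -> : (c != p) = true by lia.
by rewrite andbT andbF /= andbT.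
Qed.

Lemma rowEi1 i D p c : p \in Jset i D -> 0 < c ->
  ((i.+1, c) \in Dp i D p) =
  if c <= (start i D).-1 then (c < p) || ((i.+1, c) \in D) else (i.+1, c) \in D.
Proof.
rewrite mem_J => /andP [hp nKp] c0; rewrite mem_Dp mem_J.
move: hp; set st := start i D; clearbody st => hp.
rewrite /= eqxx /=.
have -> : (i.+1 == i) = false by lia.
have e : (i.+1 == i) = false by lia.
rewrite andFb andbT xpair_eqE e /= andbT.
case: ifP => hc; rewrite ?c0 /=.
  by case: ((i.+1, c) \in D) => /=; rewrite ?orbT //; lia.
by rewrite orbF.
Qed.

Lemma rowEo i D p r c : r != i -> r != i.+1 ->
  ((r, c) \in Dp i D p) = ((r, c) \in D).
Proof.
move=> h1 h2; rewrite mem_Dp /= (negPf h1) (negPf h2) /= xpair_eqE (negPf h1) /=.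
by rewrite !andbT orbF.
Qed.

Lemma split_rows X R M i : 0 < i -> i.+1 <= R ->
  flatten [seq rw X r M | r <- iota 1 R] =
  flatten [seq rw X r M | r <- iota 1 i.-1] ++ rw X i M ++ rw X i.+1 M ++
  flatten [seq rw X r M | r <- iota i.+2 (R - i.+1)].
Proof.
move=> i0 iR; rewrite {1}(_ : R = i.-1 + (2 + (R - i.+1))); last by lia.
rewrite iotaD (iotaD _ 2) !map_cat !flatten_cat /=.
have -> : 1 + i.-1 = i by lia.
have -> : i + 2 = i.+2 by lia.
by rewrite cats0 -!catA.
Qed.

Lemma rw_split X r M n (P : pred nat) (f : nat -> nat) : n <= M ->
  (forall c, f c = r + c - 1) ->
  (forall c, 0 < c <= n -> ((r, c) \in X) = P c) ->
  rw X r M = [seq r + c - 1 | c <- C n.+1 (M - n) & (r, c) \in X] ++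
             map f (filter P (cols n)).
Proof.
move=> hn hf hP; rewrite /rw {1}(_ : M = n + (M - n)); last by lia.
rewrite C_split filter_cat map_cat add1n; congr (_ ++ _).
rewrite (@eq_in_filter _ _ P); last by move=> c; rewrite memC => hc; apply: hP; lia.
by apply: eq_map => c; rewrite hf.
Qed.

Definition preW (X : seq (nat * nat)) M i := flatten [seq rw X r M | r <- iota 1 i.-1].
Definition postW (X : seq (nat * nat)) R M i := flatten [seq rw X r M | r <- iota i.+2 (R - i.+1)].
Definition AW (X : seq (nat * nat)) M n i := [seq i + c - 1 | c <- C n.+1 (M - n) & (i, c) \in X].
Definition BW (X : seq (nat * nat)) M n i := [seq i.+1 + c - 1 | c <- C n.+1 (M - n) & (i.+1, c) \in X].
Definition blk i n (PI PI1 : pred nat) :=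
  map (fun c => i.-1 + c) (filter PI (cols n)) ++
  map (fun c => (i.-1 + c).+1) (filter PI1 (cols n)).

Lemma word_shape X R M i n (PI PI1 : pred nat) :
  0 < i -> i.+1 <= R -> n <= M -> maxrow X <= R -> maxcol X <= M ->
  (forall c, 0 < c <= n -> ((i, c) \in X) = PI c) ->
  (forall c, 0 < c <= n -> ((i.+1, c) \in X) = PI1 c) ->
  weq (reading_word X)
      (preW X M i ++ AW X M n i ++ BW X M n i ++ blk i n PI PI1 ++ postW X R M i).
Proof.
move=> i0 iR nM hR hM h1 h2.
rewrite (rword hR hM) (split_rows _ _ i0 iR).
rewrite (@rw_split X i M n PI (fun c => i.-1 + c)) //; last by move=> c; lia.
rewrite (@rw_split X i.+1 M n PI1 (fun c => (i.-1 + c).+1)) //; last by move=> c; lia.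
rewrite /preW /postW /AW /BW /blk -!catA.
apply: weq_catl; apply: weq_catl.
rewrite !catA; do 2 apply: weq_catr.
apply: commL => x y /mem_mapF [c hc ->] /mem_mapF [d hd ->].
by move: hc hd; rewrite /cols !memC /far; lia.
Qed.

Lemma maxrow_le (X : seq (nat * nat)) B : (forall x, x \in X -> x.1 <= B) -> maxrow X <= B.
Proof.
elim: X => [|y X IH] H //=; rewrite /maxrow /= -/(maxrow X) geq_max.
by rewrite H ?mem_head //= IH // => x hx; apply: H; rewrite inE hx orbT.
Qed.

Lemma maxcol_le (X : seq (nat * nat)) B : (forall x, x \in X -> x.2 <= B) -> maxcol X <= B.
Proof.
elim: X => [|y X IH] H //=; rewrite /maxcol /= -/(maxcol X) geq_max.
by rewrite H ?mem_head //= IH // => x hx; apply: H; rewrite inE hx orbT.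
Qed.

Lemma n_le i D : (start i D).-1 <= maxcol D.
Proof.
case: (posnP (start i D).-1) => [->|h] //.
have := @maxcol_ge D (i, (start i D).-1); apply; apply: start_in; lia.
Qed.

Lemma J_le i D c : c \in Jset i D -> c <= maxcol D.
Proof. by rewrite mem_J => /andP [/andP [_ h] _]; apply: leq_trans h (n_le i D). Qed.

Lemma Dp_bounds i D p : maxrow (Dp i D p) <= maxn (maxrow D) i.+1 /\
  maxcol (Dp i D p) <= maxcol D.
Proof.
split.
  apply: maxrow_le => x; rewrite mem_Dp => /orP [/andP [/andP [h _] _]|/andP [/andP [/eqP -> _] _]].
    by apply: leq_trans (maxrow_ge h) (leq_maxl _ _).
  exact: leq_maxr.
apply: maxcol_le => x; rewrite mem_Dp => /orP [/andP [/andP [h _] _]|/andP [/andP [_ h] _]].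
  exact: maxcol_ge.
exact: (J_le h).
Qed.

Definition RR i D := maxn (maxrow D) i.+1.
Definition nn i D := (start i D).-1.
Definition KK i (D : seq (nat * nat)) := fun c => (i.+1, c) \in D.

Lemma shapeD i D : 0 < i ->
  weq (reading_word D) (preW D (maxcol D) i ++ AW D (maxcol D) (nn i D) i ++
     BW D (maxcol D) (nn i D) i ++ WD i.-1 (nn i D) (KK i D) ++ postW D (RR i D) (maxcol D) i).
Proof.
move=> i0.
have := @word_shape D (RR i D) (maxcol D) i (nn i D) predT (KK i D) i0
  (leq_maxr _ _) (n_le i D) (leq_maxl _ _) (leqnn _).
rewrite /blk filter_predT; apply => // c hc.
by apply: start_in; rewrite /nn in hc; lia.
Qed.

Lemma shapeE i D p : 0 < i -> p \in Jset i D ->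
  weq (reading_word (Dp i D p)) (preW D (maxcol D) i ++ AW D (maxcol D) (nn i D) i ++
     BW D (maxcol D) (nn i D) i ++ WE i.-1 (nn i D) (KK i D) p ++ postW D (RR i D) (maxcol D) i).
Proof.
move=> i0 hp; have [b1 b2] := Dp_bounds i D p.
have := @word_shape (Dp i D p) (RR i D) (maxcol D) i (nn i D)
  (fun c => (p < c) || (c < p) && KK i D c) (fun c => (c < p) || KK i D c) i0
  (leq_maxr _ _) (n_le i D) b1 b2.
have epre : preW (Dp i D p) (maxcol D) i = preW D (maxcol D) i.
  rewrite /preW; congr flatten; apply/eq_in_map => r; rewrite mem_iota => hr.
  rewrite /rw; congr map; apply: eq_filter => c; apply: rowEo; lia.
have epost : postW (Dp i D p) (RR i D) (maxcol D) i = postW D (RR i D) (maxcol D) i.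
  rewrite /postW; congr flatten; apply/eq_in_map => r; rewrite mem_iota => hr.
  rewrite /rw; congr map; apply: eq_filter => c; apply: rowEo; lia.
have eA : AW (Dp i D p) (maxcol D) (nn i D) i = AW D (maxcol D) (nn i D) i.
  rewrite /AW; congr map; apply: eq_in_filter => c; rewrite memC => hc.
  rewrite rowEi //; last by lia.
  by rewrite /nn in hc *; case: ifP => //; lia.
have eB : BW (Dp i D p) (maxcol D) (nn i D) i = BW D (maxcol D) (nn i D) i.
  rewrite /BW; congr map; apply: eq_in_filter => c; rewrite memC => hc.
  rewrite rowEi1 //; last by lia.
  by rewrite /nn in hc *; case: ifP => //; lia.
rewrite epre epost eA eB; apply.
- move=> c hc; rewrite rowEi //; last by lia.
  by rewrite /nn in hc; case: ifP => //; lia.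
move=> c hc; rewrite rowEi1 //; last by lia.
by rewrite /nn in hc; case: ifP => //; lia.
Qed.

Lemma DE i D p : 0 < i -> p \in Jset i D ->
  weq (reading_word D) (reading_word (Dp i D p) ++ [:: i]).
Proof.
move=> i0 hp.
apply: weq_trans (shapeD D i0) _.
apply: weq_trans _ (weq_catr _ (weq_sym (shapeE i0 hp))).
move: hp; rewrite mem_J => /andP [hp nKp].
set pre := preW _ _ _; set A := AW _ _ _ _; set B := BW _ _ _ _.
set post := postW _ _ _ _.
set W := WE _ _ _ _; set V := WD _ _ _.
have hb : weq V (W ++ [:: i]).
  by have := @blockD i.-1 (nn i D) (KK i D) p hp nKp; rewrite prednK.
have hpost : forall y, y \in post -> far i y.
  move=> y; rewrite /post /postW => /flattenP [l /mapP [r hr ->]] /mem_mapF [c hc ->].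
  by move: hr hc; rewrite mem_iota memC /far; lia.
clearbody W V post.
rewrite -!catA; do 3 apply: weq_catl.
apply: (@weq_trans _ ((W ++ [:: i]) ++ post)); first by apply: weq_catr.
rewrite -catA; apply: weq_catl; exact: comm1.
Qed.


Lemma EE i D p q : 0 < i -> p \in Jset i D -> q \in Jset i D ->
  weq (reading_word (Dp i D p)) (reading_word (Dp i D q)).
Proof.
move=> i0 hp hq.
apply: weq_trans (shapeE i0 hp) _; apply: weq_trans _ (weq_sym (shapeE i0 hq)).
do 3 apply: weq_catl; apply: weq_catr.
move: hp hq; rewrite !mem_J => /andP [/andP [p0 pn] nKp] /andP [/andP [q0 qn] nKq].
case: (ltngtP p q) => h.
- exact: blockE.
- by apply: weq_sym; apply: blockE.
- by rewrite h.
Qed.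

Lemma dem_sem X : valid (demazure X) /\
  pv (demazure X) = act (pv [::]) (reading_word X).
Proof. exact: fold_sem valid_nil (rword_pos X). Qed.

Unset Implicit Arguments.

Theorem theorem2p3 (w : seq nat) (i : nat) (D : seq (nat * nat)) :
  is_sinf w -> 0 < i -> (len (rmul w i)).+1 = len w ->
  pipe_dream D -> demazure D = w ->
  mitosis i D <> [::] ->
  (forall E, E \in mitosis i D -> demazure E = rmul w i) \/
  (forall E, E \in mitosis i D -> demazure E = w).
Proof.
move=> _ i0 _ _ hw hm.
have [vw ew] := dem_sem D; rewrite hw in vw ew.
case hJ : (Jset i D) => [|p0 J']; first by rewrite /mitosis hJ in hm.
have hp0 : p0 \in Jset i D by rewrite hJ mem_head.
set f0 := pv [::].
set g := act f0 (reading_word (Dp i D p0)).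
have hwg : pv w = hstep g i.
  by rewrite ew (DE i0 hp0) act_cat.
have hE : forall E, E \in mitosis i D -> valid (demazure E) /\ pv (demazure E) = g.
  move=> E /mapP [p hp ->]; have [v e] := dem_sem (Dp i D p); split => //.
  by rewrite e (EE i0 hp hp0).
case: (ltnP (g i) (g i.+1)) => hg.
  left => E /hE [vE eE]; apply: trimmed_inj; [by case: vE|by case: (valid_rmul vw i0)|] => x.
  by rewrite eE pv_rmul // hwg /hstep hg swK.
right => E /hE [vE eE]; apply: trimmed_inj; [by case: vE|by case: vw|] => x.
by rewrite eE hwg /hstep ltnNge hg.
Qed.
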